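(* Suppose that $q\in(0,1)$ and $d\in\mathbb N$. Then for every symmetric positive semidefinite $A,B\in M_d(\mathbb R)$, $$\mathrm{trace}\big((A+B)^qA\big)\le\mathrm{trace}(A^{q+1})+\mathrm{trace}(B^qA).$$
   Context: Powers of positive semidefinite matrices are defined by functional calculus. *)

(* Defs.v *)
(* real d x d matrices represented as nat -> nat -> R,
   only entries with indices < d are meaningful. *)
From Stdlib Require Import Reals Lra.
Open Scope R_scope.

Definition mat := nat -> nat -> R.

Fixpoint rsum (d : nat) (f : nat -> R) : R :=
  match d with
  | O => 0
  | S n => rsum n f + f n
  end.

Definition madd (A B : mat) : mat := fun i j => A i j + B i j.
Definition mmul (d : nat) (A B : mat) : mat :=
  fun i j => rsum d (fun k => A i k * B k j).
Definition mtr (A : mat) : mat := fun i j => A j i.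
Definition trace (d : nat) (A : mat) : R := rsum d (fun i => A i i).
Definition idm : mat := fun i j => if Nat.eqb i j then 1 else 0.

Definition symmetric (d : nat) (A : mat) : Prop :=
  forall i j, (i < d)%nat -> (j < d)%nat -> A i j = A j i.

Definition psd (d : nat) (A : mat) : Prop :=
  symmetric d A /\
  forall x : nat -> R, 0 <= rsum d (fun i => rsum d (fun j => x i * A i j * x j)).

Definition orthogonal (d : nat) (U : mat) : Prop :=
  (forall i j, (i < d)%nat -> (j < d)%nat -> mmul d U (mtr U) i j = idm i j) /\
  (forall i j, (i < d)%nat -> (j < d)%nat -> mmul d (mtr U) U i j = idm i j).

(* real power t^p of a nonnegative real, with 0^p = 0 (p > 0) *)
Definition rpow (t p : R) : R := if Rle_dec t 0 then 0 else Rpower t p.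

Definition is_mpow (d : nat) (p : R) (A P : mat) : Prop :=
  exists (U : mat) (lam : nat -> R),
    orthogonal d U /\
    (forall k, (k < d)%nat -> 0 <= lam k) /\
    (forall i j, (i < d)%nat -> (j < d)%nat ->
        A i j = rsum d (fun k => U i k * lam k * U j k)) /\
    (forall i j, (i < d)%nat -> (j < d)%nat ->
        P i j = rsum d (fun k => U i k * rpow (lam k) p * U j k)).

(* Main.v *)
From Pilot Require Import Defs.
From Stdlib Require Import Reals Lra Lia FunctionalExtensionality.
From Coquelicot Require Import Coquelicot.
From mathcomp Require Import all_boot all_order all_algebra.
From mathcomp Require Import Rstruct.
Import GRing.Theory Num.Theory.
Open Scope R_scope.
Import Pilot.Defs.
Definition phi (q u : R) : R := Rpower u (q-1) / (1+u).
Definition hh (q t s : R) : R := t / (t+s) * Rpower s (q-1).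

Lemma Rpower_pos x y : 0 < Rpower x y.
Proof. rewrite /Rpower. apply exp_pos. Qed.

Lemma Rpower_inv x y : 0 < x -> Rpower (/x) y = Rpower x (-y).
Proof. move=> hx. rewrite /Rpower ln_Rinv //. f_equal. ring. Qed.

Lemma Rpower_mulS x y : 0 < x -> x * Rpower x y = Rpower x (y+1).
Proof. move=> hx. rewrite Rpower_plus Rpower_1 //. ring. Qed.

Lemma Rpower_anti a b y : y <= 0 -> 0 < a <= b -> Rpower b y <= Rpower a y.
Proof.
move=> hy hab.
have -> : y = - (- y) by ring.
move: (- y) (Ropp_0_ge_le_contravar y (Rle_ge _ _ hy)) => z hz.
rewrite !Rpower_Ropp.
apply Rinv_le_contravar; first by apply Rpower_pos.
apply Rle_Rpower_l; lra.
Qed.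

Lemma phi_cont q u : 0 < u -> continuous (phi q) u.
Proof.
move=> hu. apply (ex_derive_continuous (phi q)).
rewrite /phi /Rpower. auto_derive. lra.
Qed.

Lemma hh_cont q t s : 0 <= t -> 0 < s -> continuous (hh q t) s.
Proof.
move=> ht hs. apply (ex_derive_continuous (hh q t)).
rewrite /hh /Rpower. auto_derive. lra.
Qed.

Lemma Rmin_pos' a b : 0 < a -> 0 < b -> 0 < Rmin a b.
Proof. move=> ha hb; rewrite /Rmin; case: Rle_dec => _; lra. Qed.
Arguments Rmin_pos' {a b}.

Lemma ex_phi q a b : 0 < a -> 0 < b -> ex_RInt (phi q) a b.
Proof.
move=> ha hb; apply: (@ex_RInt_continuous R_CompleteNormedModule) => z hz; apply phi_cont.
have := Rmin_pos' ha hb; lra.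
Qed.

Lemma ex_hh q t a b : 0 <= t -> 0 < a -> 0 < b -> ex_RInt (hh q t) a b.
Proof.
move=> ht ha hb; apply: (@ex_RInt_continuous R_CompleteNormedModule) => z hz; apply hh_cont => //.
have := Rmin_pos' ha hb; lra.
Qed.

Lemma subst q t a b : 0 < t -> 0 < a -> 0 < b ->
  RInt (hh q t) a b = Rpower t q * RInt (phi q) (a/t) (b/t).
Proof.
move=> ht ha hb.
have E := RInt_comp_lin (hh q t) t 0 (a/t) (b/t).
have Ea : t * (a/t) + 0 = a by field; lra.
have Eb : t * (b/t) + 0 = b by field; lra.
rewrite Ea Eb in E.
rewrite -E; last by apply ex_hh => //; lra.
have hat : 0 < a / t by apply Rdiv_lt_0_compat.
have hbt : 0 < b / t by apply Rdiv_lt_0_compat.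
rewrite -[_ * RInt _ _ _]/(scal (Rpower t q) (RInt (phi q) (a/t) (b/t))).
rewrite -RInt_scal; last by apply ex_phi.
apply RInt_ext => y hy.
have hy0 : 0 < y by have := Rmin_pos' hat hbt; lra.
rewrite /scal /= /mult /= /hh /phi Rplus_0_r.
rewrite -Rpower_mult_distr //.
have -> : Rpower t q = t * Rpower t (q - 1) by rewrite Rpower_mulS //; f_equal; ring.
have := Rpower_pos t (q-1); have := Rpower_pos y (q-1) => p1 p2.
field; split; [lra|]; apply Rgt_not_eq; nra.
Qed.

Lemma phi_nonneg q u : 0 < u -> 0 <= phi q u.
Proof. move=> hu; rewrite /phi; have := Rpower_pos u (q-1) => p; apply Rle_mult_inv_pos; lra. Qed.

Lemma phi_le1 q u : 0 < u -> phi q u <= Rpower u (q-1).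
Proof.
move=> hu; rewrite /phi; have := Rpower_pos u (q-1) => p.
apply (Rmult_le_reg_r (1+u)); first lra.
field_simplify; [nra|lra].
Qed.

Lemma phi_le2 q u : 0 < u -> phi q u <= Rpower u (q-2).
Proof.
move=> hu; rewrite /phi; have := Rpower_pos u (q-1) => p.
have -> : Rpower u (q-1) = u * Rpower u (q-2) by rewrite Rpower_mulS //; f_equal; ring.
have := Rpower_pos u (q-2) => p2.
apply (Rmult_le_reg_r (1+u)); first lra.
field_simplify; [nra|lra].
Qed.

Lemma RInt_abs_bound q u v r : 0 < u -> 0 < v -> r <= 0 ->
  (forall s, 0 < s -> phi q s <= Rpower s r) ->
  Rabs (RInt (phi q) u v) <= (Rmax u v - Rmin u v) * Rpower (Rmin u v) r.
Proof.
move=> hu hv hr hb.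
have key : forall a b, 0 < a -> a <= b ->
   Rabs (RInt (phi q) a b) <= (b - a) * Rpower a r.
  move=> a b ha hab; apply abs_RInt_le_const => //; first by apply ex_phi; lra.
  move=> t ht; rewrite Rabs_pos_eq; last by apply phi_nonneg; lra.
  apply: Rle_trans; first by apply hb; lra.
  apply Rpower_anti; lra.
rewrite /Rmax /Rmin; case: Rle_dec => h.
  by apply key.
rewrite -opp_RInt_swap; last by apply ex_phi.
rewrite /opp /= Rabs_Ropp; apply key; lra.
Qed.

Lemma J_lower q e : 0 < q < 1 -> 0 < e <= /2 -> / 4 <= RInt (phi q) e (/e).
Proof.
move=> hq he.
have hie : 2 <= / e.
  have -> : 2 = / / 2 by field.
  apply Rinv_le_contravar; lra.
have ex := ex_phi q.
rewrite -(RInt_Chasles (phi q) e (/2) (/e)); try (apply ex; lra).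
rewrite -(RInt_Chasles (phi q) (/2) 2 (/e)); try (apply ex; lra).
rewrite /plus /=.
have z1 : 0 <= RInt (phi q) e (/2).
  have := RInt_le (fun _ => 0) (phi q) e (/2).
  rewrite RInt_const /scal /= /mult /= Rmult_0_r. apply; try lra.
  - by apply ex_RInt_const.
  - by apply ex; lra.
  - move=> x hx; apply phi_nonneg; lra.
have z3 : 0 <= RInt (phi q) 2 (/e).
  have := RInt_le (fun _ => 0) (phi q) 2 (/e).
  rewrite RInt_const /scal /= /mult /= Rmult_0_r. apply; try lra.
  - by apply ex_RInt_const.
  - by apply ex; lra.
  - move=> x hx; apply phi_nonneg; lra.
have z2 : /4 <= RInt (phi q) (/2) 2.
  have := RInt_le (fun _ => /6) (phi q) (/2) 2.
  rewrite RInt_const /scal /= /mult /=.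
  have -> : (2 - /2) * /6 = /4 by field.
  apply; try lra.
  - by apply ex_RInt_const.
  - by apply ex; lra.
  - move=> x hx. rewrite /phi.
    have h1 : / 2 <= Rpower x (q-1).
      apply: (Rle_trans _ (Rpower 2 (q-1))).
        rewrite -(Rpower_1 2); last lra.
        rewrite -Rpower_Ropp Rpower_1; last lra.
        apply Rle_Rpower; lra.
      apply Rpower_anti; lra.
    apply (Rmult_le_reg_r (1+x)); first lra.
    field_simplify; lra.
lra.
Qed.

Lemma rsum_ext n f g : (forall k, lt k n -> f k = g k) -> rsum n f = rsum n g.
Proof.
elim: n => [|n IH] H //=.
rewrite IH; last by move=> k hk; apply H; lia.
by rewrite H //; lia.
Qed.

Lemma rsum_le n f g : (forall k, lt k n -> f k <= g k) -> rsum n f <= rsum n g.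
Proof.
elim: n => [|n IH] H /=; first lra.
apply Rplus_le_compat; [apply IH => k hk; apply H; lia | apply H; lia].
Qed.

Lemma rsum_plus n f g : rsum n (fun k => f k + g k) = rsum n f + rsum n g.
Proof. elim: n => [|n IH] /=; [ring | rewrite IH; ring]. Qed.

Lemma rsum_mulr n f m : rsum n (fun k => f k * m) = rsum n f * m.
Proof. elim: n => [|n IH] /=; [ring | rewrite IH; ring]. Qed.

Lemma rsum_nonneg n f : (forall k, lt k n -> 0 <= f k) -> 0 <= rsum n f.
Proof.
move=> H; have := @rsum_le n (fun _ => 0) f H.
suff -> : rsum n (fun _ => 0) = 0 by [].
by elim: n {H} => [|n IH] //=; rewrite IH; ring.
Qed.

Definition Fs q c x n s := rsum n (fun k => c k * hh q (x k) s).

Lemma Fs_int q c x a b n : 0 < a -> 0 < b -> (forall k, lt k n -> 0 <= x k) ->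
  ex_RInt (Fs q c x n) a b /\
  RInt (Fs q c x n) a b = rsum n (fun k => c k * RInt (hh q (x k)) a b).
Proof.
move=> ha hb; elim: n => [|n IH] hx.
  rewrite /Fs /=; split; first by apply ex_RInt_const.
  by rewrite RInt_const /scal /= /mult /=; ring.
have [ex1 eq1] : ex_RInt (Fs q c x n) a b /\
  RInt (Fs q c x n) a b = rsum n (fun k => c k * RInt (hh q (x k)) a b).
  by apply IH => k hk; apply hx; lia.
have ex2 : ex_RInt (hh q (x n)) a b by apply ex_hh => //; apply hx; lia.
have -> : Fs q c x n.+1 = fun s => plus (Fs q c x n s) (scal (c n) (hh q (x n) s)) by [].
split; first by apply: ex_RInt_plus => //; apply: ex_RInt_scal.
rewrite RInt_plus //; last by apply: ex_RInt_scal.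
by rewrite RInt_scal // eq1.
Qed.

Lemma stepA q c x n a b : 0 < a <= b -> (forall k, lt k n -> 0 <= x k) ->
  (forall s, 0 < s -> rsum n (fun k => c k * (x k / (x k + s))) <= 0) ->
  rsum n (fun k => c k * RInt (hh q (x k)) a b) <= 0.
Proof.
move=> hab hx Hs.
have [ex1 eq1] := Fs_int q c x a b n (ltac:(lra)) (ltac:(lra)) hx.
rewrite -eq1.
have := RInt_le (Fs q c x n) (fun _ => 0) a b.
rewrite RInt_const /scal /= /mult /= Rmult_0_r. apply.
- lra.
- exact ex1.
- by apply ex_RInt_const.
move=> s hs.
rewrite /Fs /hh.
have -> : rsum n (fun k => c k * (x k / (x k + s) * Rpower s (q - 1))) =
          rsum n (fun k => c k * (x k / (x k + s))) * Rpower s (q-1).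
  by rewrite -rsum_mulr; apply rsum_ext => k _; ring.
have := Hs s (ltac:(lra)); have := Rpower_pos s (q-1); nra.
Qed.

Definition Kt q t := (Rmax 1 (/t) - Rmin 1 (/t)) *
   (Rpower (Rmin 1 (/t)) (q-1) + Rpower (Rmin 1 (/t)) (q-2)).
Definition del q e := Rpower e q + Rpower e (1-q).
Definition et q t e := RInt (phi q) (e/t) e + RInt (phi q) (/e) (/e/t).

Lemma Rmax_scale e a b : 0 < e -> Rmax (e*a) (e*b) = e * Rmax a b.
Proof. move=> he; rewrite /Rmax; do 2 case: Rle_dec => ? //; nra. Qed.
Lemma Rmin_scale e a b : 0 < e -> Rmin (e*a) (e*b) = e * Rmin a b.
Proof. move=> he; rewrite /Rmin; do 2 case: Rle_dec => ? //; nra. Qed.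

Lemma decomp q t e : 0 < t -> 0 < e ->
  RInt (hh q t) e (/e) = Rpower t q * (RInt (phi q) e (/e) + et q t e).
Proof.
move=> ht he.
have hie : 0 < /e by apply Rinv_0_lt_compat.
have hit : 0 < /t by apply Rinv_0_lt_compat.
rewrite subst //.
have h1 : 0 < e / t by apply Rdiv_lt_0_compat.
have h2 : 0 < /e / t by apply Rdiv_lt_0_compat.
congr (_ * _).
rewrite /et.
rewrite -(RInt_Chasles (phi q) (e/t) e (/e/t)); try (apply ex_phi; lra).
rewrite -(RInt_Chasles (phi q) e (/e) (/e/t)); try (apply ex_phi; lra).
rewrite /plus /=; ring.
Qed.

Lemma et_bound q t e : 0 < q < 1 -> 0 < t -> 0 < e -> Rabs (et q t e) <= Kt q t * del q e.
Proof.
move=> hq ht he.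
have hie : 0 < /e by apply Rinv_0_lt_compat.
have hit : 0 < /t by apply Rinv_0_lt_compat.
set M := Rmax 1 (/t); set m := Rmin 1 (/t).
have hm : 0 < m by apply Rmin_pos'; lra.
have hMm : m <= M by rewrite /m /M /Rmin /Rmax; case: Rle_dec => ?; lra.
have b1 : Rabs (RInt (phi q) (e/t) e) <= Rpower e q * ((M - m) * Rpower m (q-1)).
  apply: Rle_trans.
    apply (@RInt_abs_bound q _ _ (q-1)).
    - by apply Rdiv_lt_0_compat.
    - lra.
    - lra.
    - move=> s hs; apply phi_le1 => //.
  rewrite Rmax_comm Rmin_comm.
  have -> : e / t = e * /t by [].
  have -> : Rmax e (e * /t) = e * M by rewrite -Rmax_scale // Rmult_1_r.
  have -> : Rmin e (e * /t) = e * m by rewrite -Rmin_scale // Rmult_1_r.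
  rewrite -Rpower_mult_distr //.
  have := Rpower_mulS e (q-1) he; have -> : q - 1 + 1 = q by ring.
  move=> <-. right; ring.
have b2 : Rabs (RInt (phi q) (/e) (/e/t)) <= Rpower e (1-q) * ((M - m) * Rpower m (q-2)).
  apply: Rle_trans.
    apply (@RInt_abs_bound q _ _ (q-2)).
    - lra.
    - by apply Rdiv_lt_0_compat.
    - lra.
    - move=> s hs; apply phi_le2 => //.
  have -> : /e / t = /e * /t by [].
  have -> : Rmax (/e) (/e * /t) = /e * M by rewrite -Rmax_scale // Rmult_1_r.
  have -> : Rmin (/e) (/e * /t) = /e * m by rewrite -Rmin_scale // Rmult_1_r.
  rewrite -Rpower_mult_distr //.
  have E : Rpower e (1-q) = /e * Rpower (/e) (q-2).
    by rewrite Rpower_mulS // Rpower_inv //; f_equal; ring.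
  rewrite E. right; ring.
rewrite /et /Kt /del -/M -/m.
apply: Rle_trans; first by apply Rabs_triang.
have p1 := Rpower_pos e q; have p2 := Rpower_pos e (1-q).
have p3 := Rpower_pos m (q-1); have p4 := Rpower_pos m (q-2).
have hMm' : 0 <= M - m by lra.
apply: Rle_trans; first by apply Rplus_le_compat; [exact b1 | exact b2].
have : 0 <= (M - m) * (Rpower m (q-1) * Rpower e (1-q) + Rpower m (q-2) * Rpower e q).
  apply Rmult_le_pos => //; nra.
nra.
Qed.

Lemma rpow_nonneg t p : 0 <= rpow t p.
Proof. rewrite /rpow; case: Rle_dec => _; [lra | apply Rlt_le, Rpower_pos]. Qed.

Lemma Kt_nonneg q t : 0 <= Kt q t.
Proof.
rewrite /Kt; apply Rmult_le_pos.
  rewrite /Rmin /Rmax; case: Rle_dec => ?; lra.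
have := Rpower_pos (Rmin 1 (/t)) (q-1); have := Rpower_pos (Rmin 1 (/t)) (q-2); lra.
Qed.

Lemma small_e q eta : 0 < q < 1 -> 0 < eta ->
  exists e, 0 < e <= /2 /\ del q e < 2 * eta.
Proof.
move=> hq heta.
set a := Rpower eta (/q); set b := Rpower eta (/(1-q)).
have ha : 0 < a by apply Rpower_pos.
have hb : 0 < b by apply Rpower_pos.
exists (Rmin (/2) (Rmin (a/2) (b/2))).
set e := Rmin _ _.
have he1 : e <= /2 by apply Rmin_l.
have he2 : e <= a/2 by apply: Rle_trans; [apply Rmin_r | apply Rmin_l].
have he3 : e <= b/2 by apply: Rle_trans; [apply Rmin_r | apply Rmin_r].
have he0 : 0 < e by apply Rmin_pos'; [lra | apply Rmin_pos'; lra].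
split; first lra.
have r1 : Rpower e q < eta.
  have -> : eta = Rpower a q by rewrite /a Rpower_mult Rinv_l; [rewrite Rpower_1 | lra].
  apply Rlt_Rpower_l; lra.
have r2 : Rpower e (1-q) < eta.
  have -> : eta = Rpower b (1-q) by rewrite /b Rpower_mult Rinv_l; [rewrite Rpower_1 | lra].
  apply Rlt_Rpower_l; lra.
rewrite /del; lra.
Qed.

Lemma rsum_opp n f : rsum n (fun k => - f k) = - rsum n f.
Proof. elim: n => [|n IH] /=; [ring | rewrite IH; ring]. Qed.

Lemma key_scalar q n c x : 0 < q < 1 -> (forall k, lt k n -> 0 <= x k) ->
  (forall s, 0 < s -> rsum n (fun k => c k * (x k / (x k + s))) <= 0) ->
  rsum n (fun k => c k * rpow (x k) q) <= 0.
Proof.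
move=> hq hx Hs.
set S := rsum n _.
set M0 := rsum n (fun k => Rabs (c k) * rpow (x k) q * Kt q (x k)).
have M0pos : 0 <= M0.
  apply rsum_nonneg => k _; apply Rmult_le_pos; last by apply Kt_nonneg.
  apply Rmult_le_pos; [apply Rabs_pos | apply rpow_nonneg].
have main : forall e, 0 < e <= /2 -> S * RInt (phi q) e (/e) <= M0 * del q e.
  move=> e he.
  have hie : 2 <= / e.
    have -> : 2 = / / 2 by field.
    apply Rinv_le_contravar; lra.
  have A := stepA q c x n e (/e) (ltac:(lra)) hx Hs.
  set J := RInt (phi q) e (/e) in A *.
  set ee := fun k => et q (x k) e.
  have eqk : forall k, lt k n -> c k * RInt (hh q (x k)) e (/e) =
      c k * rpow (x k) q * J + c k * rpow (x k) q * ee k.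
    move=> k hk; rewrite /ee /rpow; case: Rle_dec => h.
      have x0 : x k = 0 by have := hx k hk; lra.
      have -> : RInt (hh q (x k)) e (/e) = @RInt R_CompleteNormedModule (fun _ => 0) e (/e).
        apply RInt_ext => s hs; rewrite /hh x0 /Rdiv !Rmult_0_l //.
      rewrite RInt_const /scal /= /mult /=; lra.
    have D := decomp q (x k) e (ltac:(lra)) (ltac:(lra)).
    rewrite D /J; ring.
  rewrite (rsum_ext _ _ _ eqk) rsum_plus rsum_mulr in A.
  have B : - (M0 * del q e) <= rsum n (fun k => c k * rpow (x k) q * ee k).
    have -> : - (M0 * del q e) = rsum n (fun k => - (Rabs (c k) * rpow (x k) q * Kt q (x k) * del q e)).
      by rewrite rsum_opp /M0 rsum_mulr.
    apply rsum_le => k hk.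
    rewrite /ee /rpow; case: Rle_dec => h.
      rewrite !Rmult_0_r !Rmult_0_l; lra.
    have hxk : 0 < x k by lra.
    have := et_bound q (x k) e hq hxk (ltac:(lra)).
    have := Rpower_pos (x k) q; have := Rabs_pos (c k); have := Kt_nonneg q (x k).
    have := Rpower_pos e q; have := Rpower_pos e (1-q).
    set E := et q (x k) e; set P := Rpower (x k) q; set K := Kt q (x k).
    rewrite /del => d1 d2 k0 c0 p0 hE.
    have : Rabs (c k * P * E) <= Rabs (c k) * P * K * (Rpower e q + Rpower e (1 - q)).
      rewrite !Rabs_mult (Rabs_pos_eq P); last lra.
      rewrite !Rmult_assoc. apply Rmult_le_compat_l => //.
      apply Rmult_le_compat_l; [lra|]. rewrite -Rmult_assoc; exact hE.
    move/Rabs_le_between => [h1 h2]. lra.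
  move: A B; rewrite -/S /J.
  move: (RInt (phi q) e (/e)) => J0 A B.
  lra.
apply Rnot_lt_le => HS.
set eta := S / (8 * (M0 + 1)).
have heta : 0 < eta by apply Rdiv_lt_0_compat; lra.
have [e [he hd]] := small_e q eta hq heta.
have := main e he.
have := J_lower q e hq he.
have Eq : M0 * (2 * eta) + S / (4 * (M0 + 1)) = S / 4 by rewrite /eta; field; lra.
have : 0 < S / (4 * (M0 + 1)) by apply Rdiv_lt_0_compat; lra.
have := Rpower_pos e q; have := Rpower_pos e (1-q).
rewrite /del in hd *.
nra.
Qed.

Lemma rsum_app p m f : rsum (Nat.add p m) f = rsum p f + rsum m (fun k => f (Nat.add p k)).
Proof.
elim: m => [|m IH]; first by rewrite Nat.add_0_r /=; ring.
rewrite Nat.add_succ_r /= IH; ring.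
Qed.

Lemma key3 q d (c1 c2 c3 x1 x2 x3 : nat -> R) : 0 < q < 1 ->
  (forall k, lt k d -> 0 <= x1 k /\ 0 <= x2 k /\ 0 <= x3 k) ->
  (forall s, 0 < s -> rsum d (fun k => c1 k * (x1 k / (x1 k + s))) <=
     rsum d (fun k => c2 k * (x2 k / (x2 k + s))) + rsum d (fun k => c3 k * (x3 k / (x3 k + s)))) ->
  rsum d (fun k => c1 k * rpow (x1 k) q) <=
     rsum d (fun k => c2 k * rpow (x2 k) q) + rsum d (fun k => c3 k * rpow (x3 k) q).
Proof.
move=> hq hx Hs.
set cc := fun k => if Nat.ltb k d then c1 k else if Nat.ltb k (Nat.add d d) then - c2 (k - d)%coq_nat
                   else - c3 (k - Nat.add d d)%coq_nat.
set xx := fun k => if Nat.ltb k d then x1 k else if Nat.ltb k (Nat.add d d) then x2 (k - d)%coq_nat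
                   else x3 (k - Nat.add d d)%coq_nat.
have split : forall F : R -> R,
  rsum (Nat.add d (Nat.add d d)) (fun k => cc k * F (xx k)) =
  rsum d (fun k => c1 k * F (x1 k)) - rsum d (fun k => c2 k * F (x2 k)) - rsum d (fun k => c3 k * F (x3 k)).
  move=> F; rewrite rsum_app.
  have e1 : rsum d (fun k => cc k * F (xx k)) = rsum d (fun k => c1 k * F (x1 k)).
    apply rsum_ext => k hk; rewrite /cc /xx.
    by have -> : Nat.ltb k d = true by apply Nat.ltb_lt.
  have e2 : rsum d (fun k => cc (Nat.add d k) * F (xx (Nat.add d k))) = - rsum d (fun k => c2 k * F (x2 k)).
    rewrite -rsum_opp; apply rsum_ext => k hk; rewrite /cc /xx.
    have -> : Nat.ltb (Nat.add d k) d = false by apply Nat.ltb_ge; lia.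
    have -> : Nat.ltb (Nat.add d k) (Nat.add d d) = true by apply Nat.ltb_lt; lia.
    have -> : (Nat.add d k - d)%coq_nat = k by lia.
    ring.
  have e3 : rsum d (fun k => cc (Nat.add d (Nat.add d k)) * F (xx (Nat.add d (Nat.add d k)))) =
            - rsum d (fun k => c3 k * F (x3 k)).
    rewrite -rsum_opp; apply rsum_ext => k hk; rewrite /cc /xx.
    have -> : Nat.ltb (Nat.add d (Nat.add d k)) d = false by apply Nat.ltb_ge; lia.
    have -> : Nat.ltb (Nat.add d (Nat.add d k)) (Nat.add d d) = false by apply Nat.ltb_ge; lia.
    have -> : (Nat.add d (Nat.add d k) - Nat.add d d)%coq_nat = k by lia.
    ring.
  have e4 : rsum (Nat.add d d) (fun k => cc (Nat.add d k) * F (xx (Nat.add d k))) =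
     rsum d (fun k => cc (Nat.add d k) * F (xx (Nat.add d k))) +
     rsum d (fun k => cc (Nat.add d (Nat.add d k)) * F (xx (Nat.add d (Nat.add d k)))).
    by rewrite rsum_app.
  rewrite e4 e1 e2 e3; ring.
have hxx : forall k, lt k (Nat.add d (Nat.add d d)) -> 0 <= xx k.
  move=> k hk; rewrite /xx.
  case: (Nat.ltb_spec k d) => h1; first by have := hx k h1; tauto.
  case: (Nat.ltb_spec k (Nat.add d d)) => h2.
    by have := hx (k - d)%coq_nat (ltac:(lia)); tauto.
  by have := hx (k - Nat.add d d)%coq_nat (ltac:(lia)); tauto.
have H2 := key_scalar q (Nat.add d (Nat.add d d)) cc xx hq hxx.
have H3 : rsum (Nat.add d (Nat.add d d)) (fun k => cc k * rpow (xx k) q) <= 0.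
  apply H2 => s hs.
  rewrite (split (fun t => t / (t + s))).
  have := Hs s hs; lra.
rewrite (split (fun t => rpow t q)) in H3.
lra.
Qed.
Local Open Scope ring_scope.

Ltac toR := try (match goal with |- @eq _ ?a ?b => change (@eq R a b) end); rewrite ?mulr2n -?RplusE -?RminusE -?RmultE -?RoppE -?RinvE -?RdivE -?R0E -?R1E.

Definition sp n (U : 'M[R]_n) (p : 'I_n -> R) : 'M[R]_n :=
  U *m diag_mx (\row_k p k) *m U^T.
Definition orth n (U : 'M[R]_n) := U *m U^T = 1%:M /\ U^T *m U = 1%:M.
Arguments sp {n}. Arguments orth {n}.

Lemma spE {n} (U : 'M[R]_n) p i j : sp U p i j = \sum_k U i k * p k * U j k.
Proof. rewrite /sp mxE; apply eq_bigr => k _; by rewrite mul_mx_diag !mxE. Qed.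

Lemma sp_mul {n} (U : 'M[R]_n) p r : orth U ->
  sp U p *m sp U r = sp U (fun k => Rmult (p k) (r k)).
Proof.
move=> [h1 h2]; rewrite /sp -!mulmxA (mulmxA U^T U) h2 mul1mx [diag_mx _ *m (diag_mx _ *m _)]mulmxA mulmx_diag mulmxA.
by rewrite mulmxA; congr (_ *m diag_mx _ *m _); apply/rowP => j; rewrite !mxE.
Qed.

Lemma sp_one {n} (U : 'M[R]_n) : orth U -> sp U (fun _ => R1) = 1%:M.
Proof.
move=> [h1 h2]; rewrite /sp.
have -> : \row_(k < n) R1 = const_mx 1 by apply/rowP => j; rewrite !mxE.
by rewrite diag_const_mx mulmx1.
Qed.

Lemma sp_add {n} (U : 'M[R]_n) p r : sp U p + sp U r = sp U (fun k => Rplus (p k) (r k)).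
Proof.
apply/matrixP => i j; rewrite [(sp U p + sp U r) i j]mxE !spE -big_split; apply eq_bigr => k _ /=.
by rewrite mulrDr mulrDl.
Qed.

Lemma sp_scale {n} (U : 'M[R]_n) a p : a *: sp U p = sp U (fun k => Rmult a (p k)).
Proof.
apply/matrixP => i j; rewrite [(a *: sp U p) i j]mxE !spE mulr_sumr; apply eq_bigr => k _ /=.
toR; ring.
Qed.

Lemma sp_opp {n} (U : 'M[R]_n) p : - sp U p = sp U (fun k => Ropp (p k)).
Proof. rewrite -scaleN1r sp_scale; congr sp; apply: functional_extensionality => k; toR; ring. Qed.

Lemma sp_ext {n} (U : 'M[R]_n) p r : (forall k, p k = r k) -> sp U p = sp U r.
Proof. by move=> h; congr sp; apply: functional_extensionality. Qed.

Lemma sp_tr {n} (U : 'M[R]_n) p : (sp U p)^T = sp U p.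
Proof.
apply/matrixP => i j; rewrite [(sp U p)^T i j]mxE !spE; apply eq_bigr => k _; toR; ring.
Qed.

Lemma xrx_ge0 (x r : R) : Rle 0 r -> Rle 0 (Rmult (Rmult x r) x).
Proof. move=> h; have := Rle_0_sqr x; rewrite /Rsqr; nra. Qed.

Lemma sp_psd {n} (U N : 'M[R]_n) r : (forall k, Rle 0 (r k)) ->
  0 <= \tr (N^T *m sp U r *m N).
Proof.
move=> hr; rewrite /sp.
have -> : N^T *m (U *m diag_mx (\row_k r k) *m U^T) *m N =
   (U^T *m N)^T *m diag_mx (\row_k r k) *m (U^T *m N) by rewrite trmx_mul trmxK !mulmxA.
set M := U^T *m N.
rewrite /mxtrace; apply sumr_ge0 => i _; rewrite mxE; apply sumr_ge0 => j _.
rewrite mul_mx_diag !mxE.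
have := hr j => h; apply/RleP; toR; apply xrx_ge0 => //.
Qed.

Definition fro n (M : 'M[R]_n) := \tr (M^T *m M).
Arguments fro {n}.

Lemma fro_ge0 {n} (M : 'M[R]_n) : 0 <= fro M.
Proof.
rewrite /fro /mxtrace; apply sumr_ge0 => i _; rewrite mxE; apply sumr_ge0 => j _.
rewrite !mxE; apply/RleP; toR; apply Rle_0_sqr.
Qed.

Lemma tr_trmul {n} (M N : 'M[R]_n) : \tr (N^T *m M) = \tr (M^T *m N).
Proof. by rewrite -mxtrace_tr trmx_mul trmxK. Qed.

Lemma fro_cs {n} (M N : 'M[R]_n) : 2 * \tr (M^T *m N) <= fro M + fro N.
Proof.
have := fro_ge0 (M - N); rewrite /fro.
have -> : (M - N)^T = M^T - N^T by apply/matrixP => i j; rewrite !mxE.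
rewrite mulmxBl !mulmxBr.
rewrite !raddfB /= (tr_trmul M N).
move: (\tr (M^T *m M)) (\tr (M^T *m N)) (\tr (N^T *m N)) => a b c.
move=> /RleP h; apply/RleP; move: h; toR; lra.
Qed.

Lemma trmxD_ {n} (A B : 'M[R]_n) : (A + B)^T = A^T + B^T.
Proof. by apply/matrixP => i j; rewrite !mxE. Qed.
Lemma trmxB_ {n} (A B : 'M[R]_n) : (A - B)^T = A^T - B^T.
Proof. by apply/matrixP => i j; rewrite !mxE. Qed.
Lemma trmxZ_ {n} (c : R) (A : 'M[R]_n) : (c *: A)^T = c *: A^T.
Proof. by apply/matrixP => i j; rewrite !mxE. Qed.

Lemma tr_cyc3 {n} (A B C : 'M[R]_n) : \tr (A *m B *m C) = \tr (C *m A *m B).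
Proof. by rewrite mxtrace_mulC mulmxA. Qed.
Lemma tr_cyc4 {n} (A B C D : 'M[R]_n) : \tr (A *m B *m C *m D) = \tr (D *m A *m B *m C).
Proof. by rewrite mxtrace_mulC !mulmxA. Qed.
Lemma trB_ {n} (A B : 'M[R]_n) : \tr (A - B) = \tr A - \tr B.
Proof. by rewrite raddfB. Qed.

Lemma sp_const {n} (U : 'M[R]_n) c : orth U -> sp U (fun _ => c) = c *: 1%:M.
Proof. move=> hU; rewrite -(sp_one _ hU) sp_scale; apply sp_ext => k; by rewrite Rmult_1_r. Qed.

Lemma res_id {n} (U : 'M[R]_n) (a : 'I_n -> R) s : orth U -> (forall k, Rle 0 (a k)) -> Rlt 0 s ->
  (sp U a + s *: 1%:M) *m sp U (fun k => Rinv (Rplus (a k) s)) = 1%:M /\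
  sp U (fun k => Rinv (Rplus (a k) s)) *m (sp U a + s *: 1%:M) = 1%:M.
Proof.
move=> hU ha hs.
rewrite -(sp_const _ s hU) sp_add !sp_mul //.
split; rewrite -(sp_one _ hU); apply sp_ext => k; have := ha k; move=> h; field; lra.
Qed.

Lemma mat_key {n} (U V W : 'M[R]_n) (a b g : 'I_n -> R) (s : R) :
 orth U -> orth V -> orth W -> (forall k, Rle 0 (a k)) -> (forall k, Rle 0 (b k)) ->
 (forall k, Rle 0 (g k)) -> Rlt 0 s ->
 sp U a + sp V b = sp W g ->
 Rle (\tr (sp W (fun k => Rdiv (g k) (Rplus (g k) s)) *m sp U a))
   (Rplus (\tr (sp U (fun k => Rdiv (a k) (Rplus (a k) s)) *m sp U a))
          (\tr (sp V (fun k => Rdiv (b k) (Rplus (b k) s)) *m sp U a))).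
Proof.
move=> hU hV hW ha hb hg hs hC.
set I := (1%:M : 'M[R]_n).
set A := sp U a; set B := sp V b; set C := sp W g.
set Ra := sp U (fun k => Rinv (Rplus (a k) s)).
set Rb := sp V (fun k => Rinv (Rplus (b k) s)).
set Rc := sp W (fun k => Rinv (Rplus (g k) s)).
have [ra1 ra2] := res_id U a s hU ha hs.
have [rb1 rb2] := res_id V b s hV hb hs.
have [rc1 rc2] := res_id W g s hW hg hs.
rewrite -/Ra -/A -/I in ra1 ra2; rewrite -/Rb -/B -/I in rb1 rb2; rewrite -/Rc -/C -/I in rc1 rc2.
have Fgen : forall m (Y : 'M[R]_m) (c : 'I_m -> R), orth Y -> (forall k, Rle 0 (c k)) ->
   sp Y (fun k => Rdiv (c k) (Rplus (c k) s)) = 1%:M - s *: sp Y (fun k => Rinv (Rplus (c k) s)).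
  move=> m Y c hY hc.
  rewrite -(sp_one _ hY) sp_scale sp_opp sp_add; apply sp_ext => k.
  have := hc k => h1; field; lra.
rewrite (Fgen _ _ _ hU ha) (Fgen _ _ _ hV hb) (Fgen _ _ _ hW hg) -/Ra -/Rb -/Rc -/I -/A.
have eAC : A = (C + s *: I) - (B + s *: I).
  by rewrite /C -hC -/A -/B -[A + B + _]addrA addrK.
have r1 : Rb *m A *m Rc = Rb - Rc.
  by rewrite eAC mulmxBr mulmxBl -mulmxA rc1 mulmx1 rb2 mul1mx.
have r2 : Rc *m A *m Rb = Rb - Rc.
  by rewrite eAC mulmxBr mulmxBl rc2 mul1mx -mulmxA rb1 mulmx1.
set X := sp U (fun k => sqrt (a k)).
have hXX : X *m X = A.
  rewrite sp_mul //; apply sp_ext => k; apply sqrt_sqrt; apply ha.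
have hsb : forall k, Rle 0 (Rminus (Rinv s) (Rinv (Rplus (b k) s))).
  move=> k; have := hb k => h.
  have : Rle (Rinv (Rplus (b k) s)) (Rinv s) by apply Rinv_le_contravar; lra.
  lra.
set Z := sp V (fun k => sqrt (Rminus (Rinv s) (Rinv (Rplus (b k) s)))).
have hZZ : Z *m Z = Rinv s *: I - Rb.
  rewrite sp_mul // /I -(sp_const _ (Rinv s) hV) sp_opp sp_add.
  apply sp_ext => k; rewrite sqrt_sqrt //; apply hsb.
have trX : X^T = X by apply sp_tr.
have trZ : Z^T = Z by apply sp_tr.
have trRa : Ra^T = Ra by apply sp_tr.
have trRb : Rb^T = Rb by apply sp_tr.
have trRc : Rc^T = Rc by apply sp_tr.
have trI : I^T = I by rewrite /I trmx1.
set G := X *m Rb *m X.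
set H := X *m Rc *m X.
have trG : G^T = G by rewrite /G trmx_mul [(X *m Rb)^T]trmx_mul trX trRb mulmxA.
have trH : H^T = H by rewrite /H trmx_mul [(X *m Rc)^T]trmx_mul trX trRc mulmxA.
have gh : G *m H = G - H.
  have <- : X *m (Rb *m A *m Rc) *m X = G - H by rewrite r1 mulmxBr mulmxBl.
  by rewrite /G /H -hXX !mulmxA.
have hGH : H *m G = G - H.
  have <- : X *m (Rc *m A *m Rb) *m X = G - H by rewrite r2 mulmxBr mulmxBl.
  by rewrite /G /H -hXX !mulmxA.
set Q := I - H.
have c1 : (I + G) *m Q = I.
  by rewrite /Q mulmxDl mul1mx mulmxBr mulmx1 gh subKr subrK.
have trQ : Q^T = Q by rewrite /Q trmxB_ trI trH.
set E := X *m Z.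
set M := Q *m E.
have eE : E = (I + G) *m M by rewrite /M mulmxA c1 mul1mx.
have trE : E^T = Z *m X by rewrite /E trmx_mul trX trZ.
have eqRa : Ra = sp U (fun k => Rinv (Rplus (a k) s)) by [].
have eqRb : Rb = sp V (fun k => Rinv (Rplus (b k) s)) by [].
have eqG : G = X *m Rb *m X by [].
have eqH : H = X *m Rc *m X by [].
have eqQ : Q = I - H by [].
have eqE : E = X *m Z by [].
have eqM : M = Q *m E by [].
have eqA : A = sp U a by [].
clearbody A B C Ra Rb Rc X Z G H Q E M.
have c2 : Rle (fro M) (fro E).
  have ex : fro E = fro M + (\tr (M^T *m G *m M) + \tr (M^T *m G *m M)) + fro (G *m M).
    rewrite /fro eE trmx_mul trmxD_ trI trG [(G *m M)^T]trmx_mul trG.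
    rewrite !(mulmxDl, mulmxDr, mul1mx, mulmx1, mxtraceD) !mulmxA.
    move: (\tr (M^T *m M)) (\tr (M^T *m G *m M)) (\tr (M^T *m G *m G *m M)) => x y z.
    toR; ring.
  have p1 : Rle 0 (\tr (M^T *m G *m M)).
    rewrite eqG !mulmxA.
    have := @sp_psd _ V (X *m M) (fun k => Rinv (Rplus (b k) s)).
    rewrite -eqRb trmx_mul trX !mulmxA => h; apply/RleP; apply h => k.
    apply Rlt_le, Rinv_0_lt_compat; have := hb k; lra.
  have p2 := fro_ge0 (G *m M); move/RleP: p2 => p2.
  rewrite ex.
  have aux : forall x y z : R, Rle 0 y -> Rle 0 z -> Rle x (Rplus (Rplus x (Rplus y y)) z) by move=> *; lra.
  by apply aux.
set P := s *: Ra.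
have trP : P^T = P by rewrite /P trmxZ_ trRa.
have c3 : Rle (fro (P *m E)) (fro E).
  have hp : forall k, Rle 0 (Rplus R1 (Ropp (Rmult (Rmult s (Rinv (Rplus (a k) s))) (Rmult s (Rinv (Rplus (a k) s)))))).
    move=> k; have := ha k => h0.
    have h1 : Rlt 0 (Rplus (a k) s) by lra.
    have h2 : Rle (Rmult s (Rinv (Rplus (a k) s))) 1.
      apply (Rmult_le_reg_r (Rplus (a k) s)) => //; field_simplify; lra.
    have h3 : Rle 0 (Rmult s (Rinv (Rplus (a k) s))).
      apply Rmult_le_pos; [lra | apply Rlt_le, Rinv_0_lt_compat; lra].
    nra.
  have h := @sp_psd _ U E _ hp.
  rewrite -sp_add -sp_opp (sp_one _ hU) -sp_mul // -sp_scale -eqRa -/P in h.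
  rewrite mulmxBr mulmxBl mulmx1 raddfB /= in h.
  have -> : fro (P *m E) = \tr (E^T *m (P *m P) *m E) by rewrite /fro trmx_mul trP !mulmxA.
  rewrite /fro.
  have aux : forall x y : R, Rle 0 (Rminus x y) -> Rle y x by move=> x y; lra.
  apply aux; apply/RleP; exact h.
have c4 : Rle (\tr ((P *m E)^T *m (Q *m E))) (fro E).
  have h := fro_cs (P *m E) (Q *m E).
  rewrite eqM in c2. rewrite mulr_natl mulr2n in h.
  have aux : forall x y z w : R, Rle (Rplus x x) (Rplus y z) -> Rle y w -> Rle z w -> Rle x w.
    move=> *; lra.
  apply: (aux _ _ _ _ _ c3 c2); apply/RleP; exact h.
have F1 : fro E = Rinv s * \tr A - \tr (A *m Rb).
  rewrite /fro trE eqE mxtrace_mulC !mulmxA -[X *m Z *m Z]mulmxA hZZ.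
  rewrite mulmxBr mulmxBl -scalemxAr mulmx1 -scalemxAl hXX trB_ mxtraceZ.
  by rewrite [\tr (X *m Rb *m X)]tr_cyc3 hXX.
have F2a : \tr ((P *m E)^T *m (Q *m E)) = \tr (E *m E^T *m P *m Q).
  by rewrite trmx_mul trP mulmxA [LHS]tr_cyc4.
have F2b : E *m E^T = Rinv s *: A - G.
  rewrite trE eqE mulmxA -[X *m Z *m Z]mulmxA hZZ.
  by rewrite mulmxBr mulmxBl -scalemxAr mulmx1 -scalemxAl hXX -eqG.
have F2c : \tr ((Rinv s *: A - G) *m P *m Q) = Rinv s * s * \tr (A *m Ra *m Q) - s * \tr (G *m Ra *m Q).
  rewrite /P !mulmxBl trB_ -!scalemxAl -!scalemxAr -!scalemxAl !mxtraceZ.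
  by rewrite mulrA.
have F2d : \tr (G *m Ra *m Q) = \tr (H *m Ra).
  by rewrite tr_cyc3 eqQ mulmxBl mul1mx hGH subKr.
have F2e : \tr (A *m Ra *m Q) = \tr (A *m Ra) - \tr (A *m Ra *m H).
  by rewrite eqQ mulmxBr mulmx1 trB_.
have F2f : \tr (A *m Ra *m H) + s * \tr (H *m Ra) = \tr H.
  have e1 : H *m (A + s *: I) *m Ra = H *m A *m Ra + s *: (H *m Ra).
    by rewrite mulmxDr mulmxDl -scalemxAr mulmx1 -scalemxAl.
  have e2 : H *m (A + s *: I) *m Ra = H by rewrite -mulmxA ra1 mulmx1.
  by rewrite tr_cyc3 -mxtraceZ -mxtraceD -e1 e2.
have F2g : \tr H = \tr (A *m Rc).
  by rewrite eqH tr_cyc3 hXX.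
rewrite F2a F2b F2c F2d F2e F1 in c4.
rewrite !mulmxBl !mul1mx -!scalemxAl !trB_ !mxtraceZ (mxtrace_mulC Rc A) (mxtrace_mulC Ra A) (mxtrace_mulC Rb A).
have fin : forall tA a b c u3 u4 tH : R, Rplus u4 (Rmult s u3) = tH -> tH = c ->
   Rle (Rminus (Rmult (Rmult (Rinv s) s) (Rminus a u4)) (Rmult s u3)) (Rminus (Rmult (Rinv s) tA) b) ->
   Rle (Rminus tA (Rmult s c)) (Rplus (Rminus tA (Rmult s a)) (Rminus tA (Rmult s b))).
  move=> tA a0 b0 c0 u3 u4 tH e1 e2 h.
  have hs1 : Rmult (Rinv s) s = R1 by field; lra.
  rewrite hs1 in h.
  have h2 : Rle (Rmult s (Rminus (Rmult R1 (Rminus a0 u4)) (Rmult s u3))) (Rmult s (Rminus (Rmult (Rinv s) tA) b0)).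
    apply Rmult_le_compat_l; lra.
  have h3 : Rmult s (Rminus (Rmult (Rinv s) tA) b0) = Rminus tA (Rmult s b0) by field; lra.
  rewrite h3 in h2. rewrite -e2 -e1. nra.
exact: (fin _ _ _ _ _ _ _ F2f F2g c4).
Qed.
Lemma rsum_big n f : rsum n f = \sum_(i < n) f i.
Proof.
elim: n => [|n IH] /=; first by rewrite big_ord0.
by rewrite big_ord_recr /= IH.
Qed.

Lemma ordlt {d} (i : 'I_d) : lt i d.
Proof. apply/ltP; exact: ltn_ord. Qed.

Definition toM (d : nat) (m : mat) : 'M[R]_d := \matrix_(i < d, j < d) m i j.

Lemma tr_toM d P A : trace d (mmul d P A) = \tr (toM d P *m toM d A).
Proof.
rewrite /trace /mmul rsum_big /mxtrace; apply eq_bigr => i _.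
rewrite rsum_big !mxE; apply eq_bigr => k _; by rewrite !mxE.
Qed.

Lemma trace_toM d P : trace d P = \tr (toM d P).
Proof. rewrite /trace rsum_big /mxtrace; apply eq_bigr => i _; by rewrite mxE. Qed.

Lemma orth_toM d U : orthogonal d U -> orth (toM d U).
Proof.
move=> [h1 h2]; split; apply/matrixP => i j; rewrite !mxE.
- have := h1 i j (ordlt i) (ordlt j).
  rewrite /mmul /mtr rsum_big /idm => e.
  have -> : \sum_j0 toM d U i j0 * (toM d U)^T j0 j = \sum_(k < d) U i k * U j k.
    by apply eq_bigr => k _; rewrite !mxE.
  rewrite e; case: (eqVneq i j) => [->|ne] /=; first by rewrite Nat.eqb_refl.
  have : Nat.eqb i j = false by apply/Nat.eqb_neq => h; move/eqP: ne; apply; exact: ord_inj.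
  by move=> ->.
- have := h2 i j (ordlt i) (ordlt j).
  rewrite /mmul /mtr rsum_big /idm => e.
  have -> : \sum_j0 (toM d U)^T i j0 * toM d U j0 j = \sum_(k < d) U k i * U k j.
    by apply eq_bigr => k _; rewrite !mxE.
  rewrite e; case: (eqVneq i j) => [->|ne] /=; first by rewrite Nat.eqb_refl.
  have : Nat.eqb i j = false by apply/Nat.eqb_neq => h; move/eqP: ne; apply; exact: ord_inj.
  by move=> ->.
Qed.

Lemma sp_toM d U (lam : nat -> R) M :
  (forall i j, lt i d -> lt j d -> M i j = rsum d (fun k => U i k * lam k * U j k)) ->
  toM d M = sp (toM d U) (fun k => lam k).
Proof.
move=> h; apply/matrixP => i j; rewrite spE [LHS]mxE (h i j (ordlt i) (ordlt j)) rsum_big.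
by apply eq_bigr => k _; rewrite !mxE.
Qed.

Definition wY d (U A : mat) (k : nat) : R :=
  rsum d (fun j => rsum d (fun i => U i k * A i j) * U j k).

Lemma tr_sp_w d U (f : nat -> R) A :
  \tr (sp (toM d U) (fun k => f k) *m toM d A) = rsum d (fun k => Rmult (wY d U A k) (f k)).
Proof.
rewrite /sp -!mulmxA mxtrace_mulC -mulmxA.
rewrite rsum_big /mxtrace; apply eq_bigr => k _.
rewrite mul_diag_mx mxE mxE mulrC /wY rsum_big; congr (_ * _).
rewrite mxE; apply eq_bigr => j _; rewrite mxE rsum_big; congr (_ * _).
  by apply eq_bigr => i _; rewrite !mxE.
by rewrite mxE.
Qed.

Local Close Scope ring_scope.

Lemma rpow_succ t q : Rle 0 t -> rpow t (Rplus q R1) = Rmult (rpow t q) t.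
Proof.
move=> ht; rewrite /rpow; case: Rle_dec => h.
  by rewrite Rmult_0_l.
by rewrite Rpower_plus Rpower_1 //; lra.
Qed.

Lemma main_aux (q : R) (d : nat) (A B PAB PA1 PB : mat) :
  Rlt R0 q /\ Rlt q R1 ->
  is_mpow d q (madd A B) PAB ->
  is_mpow d (Rplus q R1) A PA1 ->
  is_mpow d q B PB ->
  Rle (trace d (mmul d PAB A)) (Rplus (trace d PA1) (trace d (mmul d PB A))).
Proof.
move=> hq [W [gam [oW [hg [dC dPAB]]]]] [U [alp [oU [ha [dA dPA1]]]]] [V [bet [oV [hb [dB dPB]]]]].
have eA := sp_toM d U alp A dA.
have eB := sp_toM d V bet B dB.
have eC := sp_toM d W gam (madd A B) dC.
have eAB : GRing.add (toM d A) (toM d B) = toM d (madd A B) by apply/matrixP => i j; rewrite !mxE.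
have hC : GRing.add (sp (toM d U) (fun k => alp k)) (sp (toM d V) (fun k => bet k)) = sp (toM d W) (fun k => gam k).
  by rewrite -eA -eB eAB eC.
have oU' := orth_toM d U oU.
have oV' := orth_toM d V oV.
have oW' := orth_toM d W oW.
have key := key3 q d (wY d W A) (wY d U A) (wY d V A) gam alp bet.
have := key hq.
have hx : forall k, lt k d -> 0 <= gam k /\ 0 <= alp k /\ 0 <= bet k.
  by move=> k hk; split; [apply hg | split; [apply ha | apply hb]].
move=> /(_ hx) H.
have Hs : forall s, 0 < s ->
  rsum d (fun k => wY d W A k * (gam k / (gam k + s))) <=
     rsum d (fun k => wY d U A k * (alp k / (alp k + s))) + rsum d (fun k => wY d V A k * (bet k / (bet k + s))).
  move=> s hs.
  have M := @mat_key d (toM d U) (toM d V) (toM d W) (fun k => alp k) (fun k => bet k) (fun k => gam k) s oU' oV' oW' (fun k => ha k (ordlt k)) (fun k => hb k (ordlt k)) (fun k => hg k (ordlt k)) hs hC.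
  rewrite -eA in M.
  rewrite (tr_sp_w d W (fun k => Rdiv (gam k) (Rplus (gam k) s)) A) in M.
  rewrite (tr_sp_w d U (fun k => Rdiv (alp k) (Rplus (alp k) s)) A) in M.
  rewrite (tr_sp_w d V (fun k => Rdiv (bet k) (Rplus (bet k) s)) A) in M.
  exact M.
have {H Hs} H := H Hs.
rewrite !tr_toM trace_toM.
rewrite (sp_toM d W (fun k => rpow (gam k) q) PAB dPAB).
rewrite (sp_toM d V (fun k => rpow (bet k) q) PB dPB).
rewrite (sp_toM d U (fun k => rpow (alp k) (Rplus q R1)) PA1 dPA1).
have -> : sp (toM d U) (fun k => rpow (alp k) (Rplus q R1)) =
          mulmx (sp (toM d U) (fun k => rpow (alp k) q)) (toM d A).
  rewrite eA sp_mul //; apply sp_ext => k; apply rpow_succ, ha, ordlt.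
rewrite (tr_sp_w d W (fun k => rpow (gam k) q) A).
rewrite (tr_sp_w d U (fun k => rpow (alp k) q) A).
rewrite (tr_sp_w d V (fun k => rpow (bet k) q) A).
exact H.
Qed.

Theorem mainTheorem19 (q : R) (d : nat) (A B PAB PA1 PB : mat) :
  0 < q < 1 ->
  psd d A -> psd d B ->
  is_mpow d q (madd A B) PAB ->
  is_mpow d (q + 1) A PA1 ->
  is_mpow d q B PB ->
  trace d (mmul d PAB A) <= trace d PA1 + trace d (mmul d PB A).
Proof.
move=> hq _ _ h1 h2 h3.
exact (main_aux q d A B PAB PA1 PB hq h1 h2 h3).
Qed.
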